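(* Let $G$ be a locally compact groupoid. Then $G$ acts properly on itself (by right multiplication) if and only if $G^{(0)}$ is Hausdorff. In particular, a locally compact space, viewed as a groupoid consisting only of units, is proper if and only if it is Hausdorff.
   Context: Locally compact: every point has a compact (quasi-compact Hausdorff) neighbourhood; the space need not be Hausdorff. A continuous map is proper if closed with quasi-compact fibres; a groupoid $H$ is proper if $(r,s)\colon H\to H^{(0)}\times H^{(0)}$ is proper. The right action of $G$ on itself has momentum map $s$ and is $(h,g)\mapsto hg$; it is proper if the groupoid $G\rtimes G=\{(h,g):s(h)=r(g)\}$ (units $G$, range $(h,g)\mapsto h$, source $(h,g)\mapsto hg$) is proper. *)

(* Defs.v *)
From mathcomp Require Import all_boot all_classical.
From mathcomp Require Import topology.
Set Implicit Arguments. Unset Strict Implicit. Unset Printing Implicit Defensive.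
Local Open Scope classical_set_scope.

Definition hausdorff_subset (X : topologicalType) (K : set X) : Prop :=
  forall x y, K x -> K y -> x <> y ->
    exists U V : set X, [/\ open U, open V, U x, V y & U `&` V `&` K = set0].

(* Locally compact in the paper's (non-Hausdorff) sense: every point has a
   compact neighbourhood, "compact" meaning quasi-compact and Hausdorff. *)
Definition lc_space (X : topologicalType) : Prop :=
  forall x : X, exists K : set X, [/\ nbhs x K, compact K & hausdorff_subset K].

Definition closed_in (X : topologicalType) (A C : set X) : Prop :=
  exists D : set X, closed D /\ C = A `&` D.

Definition proper_on (X Y : topologicalType) (A : set X) (f : X -> Y) : Prop :=
  [/\ {within A, continuous f},
      (forall C, C `<=` A -> closed_in A C -> closed (f @` C)) &
      (forall y : Y, compact (A `&` f @^-1` [set y]))].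

(* Topological groupoid with arrow space G and unit space G0; u : G0 -> G is
   the unit inclusion (automatically a topological embedding, since r o u = id).
   mul g h is meaningful when s g = r h. *)
Definition is_top_groupoid (G G0 : topologicalType) (r s : G -> G0) (u : G0 -> G)
    (mul : G -> G -> G) (inv : G -> G) : Prop :=
  [/\ (forall x, r (u x) = x /\ s (u x) = x),
      (forall g h, s g = r h -> r (mul g h) = r g /\ s (mul g h) = s h),
      (forall g h k, s g = r h -> s h = r k -> mul (mul g h) k = mul g (mul h k)),
      (forall g, mul (u (r g)) g = g /\ mul g (u (s g)) = g) &
      (forall g, [/\ r (inv g) = s g, s (inv g) = r g,
                     mul g (inv g) = u (r g) & mul (inv g) g = u (s g)])] /\
  [/\ [/\ continuous r, continuous s, continuous u & continuous inv] &
      {within [set p : G * G | s p.1 = r p.2], continuous (fun p => mul p.1 p.2)}].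

Definition groupoid_proper (H H0 : topologicalType) (r s : H -> H0) : Prop :=
  proper_on setT (fun h => (r h, s h)).

(* The right action of G on itself is proper: the action groupoid
   G ⋊ G = {(h,g) : s h = r g} (subspace of G x G), with range (h,g) |-> h and
   source (h,g) |-> hg, is proper. *)
Definition self_action_proper (G G0 : topologicalType) (r s : G -> G0)
    (mul : G -> G -> G) : Prop :=
  proper_on [set p : G * G | s p.1 = r p.2] (fun p => (p.1, mul p.1 p.2)).

(* Main.v *)
Require Import Defs.
From mathcomp Require Import all_boot all_classical.
From mathcomp Require Import topology.
Set Implicit Arguments. Unset Strict Implicit. Unset Printing Implicit Defensive.
Local Open Scope classical_set_scope.

Lemma wc_nbhs {T U : topologicalType} (E : set T) (f : T -> U) x :
  {within E, continuous f} -> E x -> forall W, nbhs (f x) W ->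
  nbhs x (fun y => E y -> W (f y)).
Proof. move=> /subspace_continuousP c Ex W Wn; exact: (c x Ex W Wn). Qed.

Lemma wc_intro {T U : topologicalType} (E : set T) (f : T -> U) :
  (forall x, E x -> forall W, nbhs (f x) W -> nbhs x (fun y => E y -> W (f y))) ->
  {within E, continuous f}.
Proof. move=> H; apply/subspace_continuousP => x Ex W Wn; exact: H. Qed.

Lemma prod_nbhsE {T U : topologicalType} (a:T) (b:U) W : nbhs (a,b) W <->
  exists2 P : set T * set U, nbhs a P.1 /\ nbhs b P.2 & P.1 `*` P.2 `<=` W.
Proof. by []. Qed.

Lemma prod_nbhsI {T U : topologicalType} (a:T) (b:U) (P : set T) (Q : set U) :
  nbhs a P -> nbhs b Q -> nbhs (a,b) (P `*` Q).
Proof. by move=> HP HQ; apply/prod_nbhsE; exists (P,Q). Qed.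

Lemma cont_nbhs {T U : topologicalType} (f : T -> U) x W :
  continuous f -> nbhs (f x) W -> nbhs x (f @^-1` W).
Proof. by move=> c; apply: c. Qed.

Lemma compact_subsingleton {T : topologicalType} (S : set T) :
  (forall a b, S a -> S b -> a = b) -> compact S.
Proof.
move=> H; case: (pselect (exists a, S a)) => [[a Sa]|nS].
  have -> : S = [set a].
    by apply/seteqP; split=> x; [move=> Sx; exact: H _ _ Sx Sa | move=> ->].
  exact: compact_set1.
have -> : S = set0 by apply/seteqP; split=> x // Sx; apply: nS; exists x.
exact: compact0.
Qed.

Lemma gcancel (G G0 : topologicalType) (r s : G -> G0) (u : G0 -> G)
    (mul : G -> G -> G) (inv : G -> G) :
  is_top_groupoid r s u mul inv ->
  forall h g, s h = r g -> mul (inv h) (mul h g) = g.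
Proof.
move=> [[Hu Hmul Hass Hunit Hinv] _] h g e.
have [i1 i2 i3 i4] := Hinv h.
rewrite -Hass ?i2 //; rewrite i4 e; exact: (Hunit g).1.
Qed.

Lemma part1_fwd (G G0 : topologicalType) (r s : G -> G0) (u : G0 -> G)
    (mul : G -> G -> G) (inv : G -> G) :
  is_top_groupoid r s u mul inv ->
  self_action_proper r s mul -> hausdorff_space G0.
Proof.
move=> [[Hu Hmul Hass Hunit Hinv] [[cr cs cu cinv] cmul]] [_ Hcl _] x y clxy.
have cA : closed ((fun p : G * G => (p.1, mul p.1 p.2)) @` [set p | s p.1 = r p.2]).
  apply: Hcl => //; exists setT; split; [exact: closedT | by rewrite setIT].
have : closure ((fun p : G * G => (p.1, mul p.1 p.2)) @` [set p | s p.1 = r p.2]) (u x, u y).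
  move=> W /prod_nbhsE [[W1 W2] [n1 n2] sub].
  have [z [W1z W2z]] := clxy _ _ (cont_nbhs cu n1) (cont_nbhs cu n2).
  exists (u z, u z); split; last by apply: sub; split.
  have e : mul (u z) (u z) = u z by have := (Hunit (u z)).1; rewrite (Hu z).1.
  exists (u z, u z); first by rewrite /= (Hu z).1 (Hu z).2.
  by rewrite /= e.
move=> /cA [[h g] /= Ahg [e1 e2]].
rewrite -(Hu x).1 -(Hu y).1 -e1 -e2; exact: esym (Hmul _ _ Ahg).1.
Qed.

Lemma part1_bwd (G G0 : topologicalType) (r s : G -> G0) (u : G0 -> G)
    (mul : G -> G -> G) (inv : G -> G) :
  is_top_groupoid r s u mul inv ->
  hausdorff_space G0 -> self_action_proper r s mul.
Proof.
move=> Hg; have Hc := gcancel Hg.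
move: Hg => [[Hu Hmul Hass Hunit Hinv] [[cr cs cu cinv] cmul]] haus.
split.
- apply: wc_intro => -[a b] Ax W /prod_nbhsE [[W1 W2] [W1n W2n] sub].
  have M := wc_nbhs cmul Ax W2n.
  have N1 : nbhs (a, b) (W1 `*` setT) by apply: prod_nbhsI => //; exact: filterT.
  apply: filterS (filterI M N1) => -[c d] [/= Mcd [/= W1c _]] Acd.
  by apply: sub; split => //; exact: Mcd.
- move=> C _ [D [cD ->]] [h k] cl.
  have ehk : r h = r k.
    apply: haus => P Q Pn Qn.
    have [_ [[[h' g'] [Ahg _] <-] [/= Ph' Qk']]] :=
      cl _ (prod_nbhsI (cont_nbhs cr Pn) (cont_nbhs cr Qn)).
    by exists (r h'); split => //; rewrite -(Hmul _ _ Ahg).1.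
  have [i1 i2 i3 i4] := Hinv h.
  have Eik : s (inv h) = r k by rewrite i2.
  have Ahg : s h = r (mul (inv h) k) by rewrite (Hmul _ _ Eik).1 i1.
  exists (h, mul (inv h) k); last first.
    rewrite /= -Hass ?i3 ?ehk; first by rewrite (Hunit k).1.
      by rewrite i1.
    done.
  split => //; apply: cD => W /prod_nbhsE [[W1 W2] [W1n W2n] sub].
  have M := wc_nbhs cmul (Eik : [set p : G * G | s p.1 = r p.2] (inv h, k)) W2n.
  move: M => /prod_nbhsE [[M1 M2] [M1n M2n] subM].
  have N : nbhs (h, k) ((W1 `&` inv @^-1` M1) `*` M2).
    by apply: prod_nbhsI => //; apply: filterI => //; exact: cont_nbhs.
  have [_ [[[h' g'] [Ahg' Dhg'] <-] [/= [W1h' M1h'] M2b]]] := cl _ N.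
  exists (h', g'); split => //; apply: sub; split => //=.
  change (W2 g'); have e := Hc _ _ Ahg'; rewrite -[g' in W2 g']e.
  have [j1 j2 j3 j4] := Hinv h'.
  apply: (subM (inv h', mul h' g')) => //=.
  by rewrite j2 (Hmul _ _ Ahg').1.
- move=> y; apply: compact_subsingleton => -[a1 b1] [a2 b2] [/= A1 e1] [/= A2 e2].
  rewrite -e2 in e1; case: e1 => ea eb; subst a1.
  by congr (_, _); rewrite -(Hc _ _ A1) eb (Hc _ _ A2).
Qed.

Lemma part2 (X : topologicalType) :
  is_top_groupoid (@id X) (@id X) (@id X) (fun g _ => g) (@id X) /\
  (groupoid_proper (@id X) (@id X) <-> hausdorff_space X).
Proof.
have cid : continuous (@id X) by move=> x; exact: cvg_id.
split.
  split.
    split => //; by move=> g h e.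
  split; first by split.
  apply: wc_intro => -[a b] _ W Wn.
  by apply: filterS (prod_nbhsI Wn filterT) => -[c d] [/= ? _] _.
split.
- move=> [_ Hcl _] x y clxy.
  have cA : closed ((fun h : X => (h, h)) @` setT).
    apply: Hcl => //; exists setT; split; [exact: closedT | by rewrite setIT].
  have : closure ((fun h : X => (h, h)) @` setT) (x, y).
    move=> W /prod_nbhsE [[W1 W2] [n1 n2] sub].
    have [z [W1z W2z]] := clxy _ _ n1 n2.
    by exists (z, z); split; [exists z | apply: sub].
  by move=> /cA [z _ [<- <-]].
- move=> haus; split.
  + apply: wc_intro => x _ W /prod_nbhsE [[W1 W2] [n1 n2] sub].
    by apply: filterS (filterI n1 n2) => z [? ?] _; apply: sub.
  + move=> C _ [D [cD ->]] [a b] cl.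
    have eab : a = b.
      apply: haus => P Q Pn Qn.
      have [_ [[c [_ _] <-] [/= Pc Qc]]] := cl _ (prod_nbhsI Pn Qn).
      by exists c.
    subst b; exists a => //; split => //; apply: cD => W Wn.
    have [_ [[c [_ Dc] <-] [/= Wc _]]] := cl _ (prod_nbhsI Wn Wn).
    by exists c.
  + move=> y; apply: compact_subsingleton => a b [_ e1] [_ e2].
    by rewrite -e2 in e1; case: e1.
Qed.

Theorem proposition2p16 :
  (forall (G G0 : topologicalType) (r s : G -> G0) (u : G0 -> G)
          (mul : G -> G -> G) (inv : G -> G),
     is_top_groupoid r s u mul inv -> lc_space G ->
     (self_action_proper r s mul <-> hausdorff_space G0))
  /\
  (forall X : topologicalType, lc_space X ->
     (is_top_groupoid (@id X) (@id X) (@id X) (fun g _ => g) (@id X) /\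
      (groupoid_proper (@id X) (@id X) <-> hausdorff_space X))).
Proof.
split.
  move=> G G0 r s u mul inv Hg _; split; [exact: part1_fwd Hg | exact: part1_bwd Hg].
by move=> X _; exact: part2.
Qed.
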